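(* Let $n\ge 2$, $b>0$, and let $p_0,\dots,p_{n-2}$ be complex-valued, $C^\infty$, $b$-periodic functions on $\mathbb{R}$; let $\mathcal{L}u := u^{(n)}+\sum_{k=0}^{n-2}p_k(x)u^{(k)}$. Consider the multipoint eigenvalue problem $$\mathcal{L}u=\lambda u,\qquad u(0)=u(b)=u(2b)=\cdots=u((n-1)b)=0 .$$ Let $\mu$ be an eigenvalue of this problem (i.e. it has a nontrivial solution for $\lambda=\mu$) and let $\mathcal{D}_\mu$ be the vector space of its solutions for $\lambda=\mu$ (the eigenspace). Then $\mathcal{D}_\mu$ has a basis consisting of Floquet solutions (pure, i.e. of rank $1$, and possibly generalized, i.e. of rank $\ge 2$) of $\mathcal{L}u=\mu u$. Moreover, if a Floquet solution $\psi^l$ of rank $l\ge 2$ associated to a multiplier $r$ belongs to $\mathcal{D}_\mu$, then the Floquet solution $\psi^{l-1}$ of rank $l-1$ associated to $r$ for which $\psi^l(x+b)=r\psi^l(x)+\psi^{l-1}(x)$ for all $x$ also belongs to $\mathcal{D}_\mu$.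
   Context: Floquet solutions (for fixed $\lambda$): a nontrivial solution $u^1$ of $\mathcal{L}u=\lambda u$ with $u^1(x+b)=r\,u^1(x)$ for all $x\in\mathbb{R}$ is a (pure) Floquet solution of rank $1$ associated to the multiplier $r$. For $l\ge 2$, a solution $u^l$ of $\mathcal{L}u=\lambda u$ is a (generalized) Floquet solution of rank $l$ associated to $r$ if there is a Floquet solution $u^{l-1}$ of rank $l-1$ associated to $r$ such that $u^l(x+b)=r\,u^l(x)+u^{l-1}(x)$ for all $x\in\mathbb{R}$. The multipliers $r$ are the eigenvalues of the map $f(x)\mapsto f(x+b)$ on the $n$-dimensional solution space of $\mathcal{L}u=\lambda u$. *)

(* Defs.v *)
From Stdlib Require Import Reals.
From Coquelicot Require Import Coquelicot.
Open Scope R_scope.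

Definition deriv_chain (u : R -> C) (n : nat) (d : nat -> R -> C) : Prop :=
  d 0%nat = u /\ forall k, (k < n)%nat -> forall x, is_derive (d k) x (d (S k) x).

Definition smooth (u : R -> C) : Prop :=
  exists d : nat -> R -> C, d 0%nat = u /\ forall k x, is_derive (d k) x (d (S k) x).

Definition periodic (b : R) (f : R -> C) : Prop := forall x, f (x + b) = f x.

Fixpoint csum (f : nat -> C) (m : nat) : C :=
  match m with
  | O => RtoC 0
  | S m' => (csum f m' + f m')%C
  end.

Definition is_solution (n : nat) (p : nat -> R -> C) (lam : C) (u : R -> C) : Prop :=
  exists d : nat -> R -> C, deriv_chain u n d /\
    forall x, (d n x + csum (fun k => p k x * d k x) (n - 1)%nat)%C = (lam * u x)%C.

Fixpoint floquet (n : nat) (p : nat -> R -> C) (b : R) (lam r : C) (l : nat) (u : R -> C)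
  : Prop :=
  match l with
  | O => False
  | S O => is_solution n p lam u /\ (exists x, u x <> RtoC 0) /\
           forall x, u (x + b) = (r * u x)%C
  | S l' => is_solution n p lam u /\
           exists v, floquet n p b lam r l' v /\
                     forall x, u (x + b) = (r * u x + v x)%C
  end.

Definition in_eigenspace (n : nat) (p : nat -> R -> C) (b : R) (lam : C) (u : R -> C)
  : Prop :=
  is_solution n p lam u /\ forall j, (j < n)%nat -> u (INR j * b) = RtoC 0.

Definition is_eigenvalue (n : nat) (p : nat -> R -> C) (b : R) (lam : C) : Prop :=
  exists u, in_eigenspace n p b lam u /\ exists x, u x <> RtoC 0.

(* Main.v *)
Require Import Defs.
From Stdlib Require Import Reals List Lia Lra Classical FunctionalExtensionality ClassicalEpsilon Arith.
From Coquelicot Require Import Coquelicot.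
From mathcomp Require all_boot all_order all_algebra.
From mathcomp Require Rstruct.
From mathcomp.real_closed Require complex.
Set Bullet Behavior "Strict Subproofs".

Fixpoint hornerL (L : list C) (z : C) : C :=
  match L with nil => RtoC 0 | cons c L' => Cplus c (Cmult z (hornerL L' z)) end.

Definition Cz : C := RtoC 0%R.
Module FTAM.
Import all_boot all_order all_algebra Rstruct complex.
Import GRing.Theory Num.Theory.
Local Open Scope ring_scope.

Definition phi (z : C) : R[i] := Complex (fst z) (snd z).

Lemma phi_add x y : phi (Cplus x y) = phi x + phi y.
Proof. by case: x => a b; case: y => c d. Qed.
Lemma phi_mul x y : phi (Cmult x y) = phi x * phi y.
Proof. by case: x => a b; case: y => c d. Qed.
Lemma phi0 : phi (Cz) = 0. Proof. by []. Qed.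

Lemma phi_horner L z : phi (hornerL L z) = horner_rec (map phi L) (phi z).
Proof.
elim: L => [|c L IH] //=. by rewrite phi_add phi_mul IH addrC mulrC.
Qed.

Lemma phi_inj0 z : phi z = 0 -> z = Cz.
Proof. case: z => a b /= [-> ->]. by []. Qed.

Lemma fta c L : (exists x, List.In x L /\ x <> Cz) ->
  exists z, hornerL (c :: L) z = Cz.
Proof.
move=> [x [Hin Hx]].
have [y Hy] : exists y, root (Poly (map phi (c :: L))) y.
  apply/closed_rootP.
  apply/negP => /eqP Hs.
  have := In_nth L x (Cz) Hin. case=> j [Hj Hnth].
  have := coef_Poly (map phi (c :: L)) j.+1.
  rewrite nth_default ?Hs //.
  rewrite (nth_map (Cz)) /=; last first. have E : forall T (s : seq T), size s = List.length s by move=> T; elim => //= ? ? ->. rewrite E; apply/ltP; simpl; lia.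
  move=> H. apply: Hx. rewrite -Hnth.
  have E2 : forall (s : seq C) k, seq.nth (Cz) s k = List.nth k s (Cz) by elim => [|? ? IH] [|k] //=.
  rewrite -E2. apply: phi_inj0. by rewrite -H.
move: Hy; case: y => a b Hy.
exists (a, b).
apply: phi_inj0. rewrite phi_horner.
by move/rootP: Hy; rewrite horner_Poly.
Qed.
End FTAM.
Definition fta := FTAM.fta.
Open Scope C_scope.

Open Scope C_scope.
Notation c0 := (RtoC 0%R).
Notation c1 := (RtoC 1%R).

Lemma csum_ext (f g : nat -> C) m : (forall i, (i < m)%nat -> f i = g i) -> csum f m = csum g m.
Proof. induction m; simpl; intros H; auto. rewrite IHm by (intros; apply H; lia). rewrite H by lia. auto. Qed.

Lemma csum_plus (f g : nat -> C) m : csum (fun i => f i + g i) m = csum f m + csum g m.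
Proof. induction m; simpl. ring. rewrite IHm. ring. Qed.

Lemma csum_scal (a : C) (f : nat -> C) m : csum (fun i => a * f i) m = a * csum f m.
Proof. induction m; simpl. ring. rewrite IHm. ring. Qed.

Lemma csum_zero (f : nat -> C) m : (forall i, (i < m)%nat -> f i = c0) -> csum f m = c0.
Proof. intros H. rewrite (csum_ext f (fun _ => c0)) by (intros; rewrite H; auto). clear H. induction m; simpl; auto. rewrite IHm. ring. Qed.

Lemma csum_shift (f : nat -> C) m : csum f (S m) = f 0%nat + csum (fun i => f (S i)) m.
Proof. induction m. simpl. ring. change (csum f (S (S m))) with (csum f (S m) + f (S m)). rewrite IHm. simpl. ring. Qed.

Lemma csum_split (f : nat -> C) m1 m2 : csum f (m1 + m2) = csum f m1 + csum (fun j => f (m1 + j)%nat) m2.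
Proof. induction m2; simpl. rewrite Nat.add_0_r. ring. rewrite Nat.add_succ_r. simpl. rewrite IHm2. ring. Qed.

Lemma csum_single (f : nat -> C) m i0 : (i0 < m)%nat -> (forall i, (i < m)%nat -> i <> i0 -> f i = c0) -> csum f m = f i0.
Proof.
  induction m; intros Hi H. lia. simpl.
  destruct (Nat.eq_dec i0 m). subst. rewrite csum_zero. ring. intros; apply H; lia.
  rewrite IHm by (auto; lia). rewrite (H m) by lia. ring.
Qed.

Lemma Cmult_eq0 (a z : C) : a * z = c0 -> z <> c0 -> a = c0.
Proof. intros H Hz. destruct (Ceq_dec a c0); auto. exfalso. apply Hz.
  replace z with (/ a * (a * z)) by (field; auto). rewrite H. ring. Qed.

Open Scope C_scope.

Definition X := R -> C.
Definition vzero : X := fun _ => c0.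
Definition vadd (u v : X) : X := fun x => u x + v x.
Definition vscal (a : C) (u : X) : X := fun x => a * u x.
Definition lc (c : nat -> C) (f : nat -> X) m : X := fun x => csum (fun i => c i * f i x) m.
Definition subsp (W : X -> Prop) := W vzero /\ (forall u v, W u -> W v -> W (vadd u v)) /\
  (forall a u, W u -> W (vscal a u)).
Definition fam (W : X -> Prop) (f : nat -> X) m := forall i, (i < m)%nat -> W (f i).
Definition indep (f : nat -> X) m := forall c : nat -> C,
  (forall x, csum (fun i => c i * f i x) m = c0) -> forall i, (i < m)%nat -> c i = c0.
Definition bnd (W : X -> Prop) N := forall f, fam W f (S N) -> ~ indep f (S N).

Lemma lc_S c f m : lc c f (S m) = vadd (lc c f m) (vscal (c m) (f m)).
Proof. reflexivity. Qed.

Lemma subsp_lc W c f m : subsp W -> fam W f m -> W (lc c f m).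
Proof.
  intros [H0 [Ha Hs]] Hf. induction m.
  - replace (lc c f 0) with vzero; auto.
  - rewrite lc_S. apply Ha. apply IHm. intros i Hi; apply Hf; lia. apply Hs, Hf; lia.
Qed.

Lemma subsp_sub W u v : subsp W -> W u -> W v -> W (fun x => u x - v x).
Proof. intros [H0 [Ha Hs]] Hu Hv.
  replace (fun x => u x - v x) with (vadd u (vscal (-1) v)). apply Ha; auto.
  apply functional_extensionality; intros x; unfold vadd, vscal; ring. Qed.

Lemma indep_nonzero f m i : indep f m -> (i < m)%nat -> exists x, f i x <> c0.
Proof.
  intros H Hi. apply NNPP; intros Hn.
  assert (Hz : forall x, f i x = c0). { intros x. apply NNPP; intros Hx; apply Hn; eauto. }
  assert (c1 = c0). {
    assert (E := H (fun j => if Nat.eqb j i then c1 else c0)).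
    cbv beta in E. assert (E2 : forall x : R,
      csum (fun i0 : nat => (if i0 =? i then c1 else c0) * f i0 x) m = c0).
    { intros x. apply csum_zero. intros j Hj. destruct (Nat.eqb_spec j i). subst. rewrite Hz. ring. ring. }
    specialize (E E2 i Hi). rewrite Nat.eqb_refl in E. auto. }
  match goal with E : c1 = c0 |- _ => injection E; apply R1_neq_R0 end.
Qed.

Lemma maxbasis W N : bnd W N -> exists m f, fam W f m /\ indep f m /\
  (forall g, fam W g (S m) -> ~ indep g (S m)).
Proof.
  intros HB.
  set (Q := fun m => exists f, fam W f m /\ indep f m).
  assert (Hd : forall d k, Q k -> (k + d = S N)%nat -> exists m, Q m /\ ~ Q (S m)).
  { induction d; intros k Hk Hkd.
    - rewrite Nat.add_0_r in Hkd. subst. destruct Hk as [f [Hf Hi]]. exfalso. apply (HB f); auto.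
    - destruct (classic (Q (S k))) as [HQ|HQ].
      + apply (IHd (S k)); auto. lia.
      + eauto. }
  destruct (Hd (S N) 0%nat) as [m [[f [Hf Hi]] Hn]].
  - exists (fun _ => vzero). split. intros i Hi; lia. intros c _ i Hi; lia.
  - lia.
  - exists m, f. repeat split; auto. intros g Hg Hig. apply Hn. exists g; auto.
Qed.

Definition ext (f : nat -> X) (u : X) m : nat -> X := fun i => if Nat.eqb i m then u else f i.

Lemma csum_ext_last (f : nat -> X) u m c x :
  csum (fun i => c i * ext f u m i x) (S m) = csum (fun i => c i * f i x) m + c m * u x.
Proof. simpl. unfold ext at 2. rewrite Nat.eqb_refl. f_equal. apply csum_ext. intros i Hi.
  unfold ext. destruct (Nat.eqb_spec i m); auto; lia. Qed.

Lemma span W f m u : subsp W -> fam W f m -> indep f m ->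
  (forall g, fam W g (S m) -> ~ indep g (S m)) -> W u ->
  exists c, forall x, u x = csum (fun i => c i * f i x) m.
Proof.
  intros HS Hf Hi Hmax Hu.
  assert (Hg : fam W (ext f u m) (S m)).
  { intros i Hi'. unfold ext. destruct (Nat.eqb_spec i m); auto. apply Hf; lia. }
  specialize (Hmax _ Hg). unfold indep in Hmax.
  apply not_all_ex_not in Hmax. destruct Hmax as [c Hc].
  apply imply_to_and in Hc. destruct Hc as [Hc1 Hc2].
  apply not_all_ex_not in Hc2. destruct Hc2 as [i Hc2].
  apply imply_to_and in Hc2. destruct Hc2 as [Him Hci].
  assert (Hcm : c m <> c0).
  { intros Hcm. apply Hci. 
    assert (Hz : forall x, csum (fun i => c i * f i x) m = c0).
    { intros x. rewrite <- (Hc1 x). rewrite csum_ext_last, Hcm. ring. }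
    destruct (Nat.eq_dec i m). subst; auto. apply Hi; auto. lia. }
  exists (fun i => - c i / c m). intros x.
  specialize (Hc1 x). rewrite csum_ext_last in Hc1.
  rewrite (csum_ext _ (fun i => (- / c m) * (c i * f i x))).
  rewrite csum_scal. 
  replace (csum (fun i : nat => c i * f i x) m) with (- (c m * u x)).
  field. auto.
  rewrite <- (Cplus_0_l (- (c m * u x))). rewrite <- Hc1. ring.
  intros; unfold Cdiv; ring.
Qed.

Open Scope C_scope.

Lemma nz_or (u : X) : u = vzero \/ exists x, u x <> c0.
Proof. destruct (classic (exists x, u x <> c0)); auto. left. apply functional_extensionality.
  intros x. apply NNPP. intros Hx. apply H. eauto. Qed.

Section Shift.
Variable b : R.
Definition Tsh (u : X) : X := fun x => u (x + b)%R.
Definition Nop (a : C) (u : X) : X := fun x => u (x + b)%R - a * u x.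
Definition Niter k a u := Nat.iter k (Nop a) u.
Definition inv (W : X -> Prop) := forall u, W u -> W (Tsh u).

Lemma Nop_in W a u : subsp W -> inv W -> W u -> W (Nop a u).
Proof. intros HS HI Hu. destruct HS as [H0 [Ha Hs]].
  replace (Nop a u) with (vadd (Tsh u) (vscal (-a) u)). apply Ha; auto.
  apply functional_extensionality; intros x; unfold vadd, vscal, Nop, Tsh; ring. Qed.

Lemma Niter_in W k a u : subsp W -> inv W -> W u -> W (Niter k a u).
Proof. intros HS HI Hu. induction k; simpl; auto. apply Nop_in; auto. Qed.

Lemma Niter_S k a u : Niter (S k) a u = Niter k a (Nop a u).
Proof. unfold Niter. rewrite Nat.iter_succ_r. auto. Qed.

Lemma Niter_add j k a u : Niter (j + k) a u = Niter j a (Niter k a u).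
Proof. unfold Niter. apply Nat.iter_add. Qed.

Lemma Nop_add a u v : Nop a (vadd u v) = vadd (Nop a u) (Nop a v).
Proof. apply functional_extensionality; intros x; unfold vadd, Nop; ring. Qed.
Lemma Nop_scal a c u : Nop a (vscal c u) = vscal c (Nop a u).
Proof. apply functional_extensionality; intros x; unfold vscal, Nop; ring. Qed.
Lemma Nop_zero a : Nop a vzero = vzero.
Proof. apply functional_extensionality; intros x; unfold vzero, Nop; ring. Qed.

Lemma Niter_add' k a u v : Niter k a (vadd u v) = vadd (Niter k a u) (Niter k a v).
Proof. induction k; simpl; auto. fold (Niter k a (vadd u v)). rewrite IHk. apply Nop_add. Qed.
Lemma Niter_scal k a c u : Niter k a (vscal c u) = vscal c (Niter k a u).
Proof. induction k; simpl; auto. fold (Niter k a (vscal c u)). rewrite IHk. apply Nop_scal. Qed.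
Lemma Niter_zero k a : Niter k a vzero = vzero.
Proof. induction k; simpl; auto. fold (Niter k a vzero). rewrite IHk. apply Nop_zero. Qed.
Lemma Niter_lc k a c f m : Niter k a (lc c f m) = lc c (fun i => Niter k a (f i)) m.
Proof. induction m. apply Niter_zero. rewrite !lc_S, Niter_add', Niter_scal, IHm. auto. Qed.
Lemma Niter_sub k a u v : Niter k a (fun x => u x - v x) = fun x => Niter k a u x - Niter k a v x.
Proof. replace (fun x => u x - v x) with (vadd u (vscal (-1) v)).
  rewrite Niter_add', Niter_scal. apply functional_extensionality; intros x; unfold vadd, vscal; ring.
  apply functional_extensionality; intros x; unfold vadd, vscal; ring. Qed.

Lemma Tsh_Niter k a u : Tsh (Niter k a u) = Niter k a (Tsh u).
Proof. induction k; simpl; auto. fold (Niter k a u). fold (Niter k a (Tsh u)). rewrite <- IHk. auto. Qed.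

(* Horner application of a polynomial in the shift *)
Fixpoint happ (L : list C) (w : X) : X :=
  match L with nil => vzero | cons c L' => vadd (vscal c w) (Tsh (happ L' w)) end.

Fixpoint hdiv (a : C) (L : list C) : list C * C :=
  match L with
  | nil => (nil, c0)
  | cons c L' => match L' with
                 | nil => (nil, c)
                 | _ => let (Q, r) := hdiv a L' in (cons r Q, c + a * r)
                 end
  end.

Lemma hdiv_cons a c c' L' : hdiv a (c :: c' :: L') = let (Q, r) := hdiv a (c' :: L') in (cons r Q, c + a * r).
Proof. reflexivity. Qed.

Lemma hdiv_happ a L w : happ L w = vadd (Nop a (happ (fst (hdiv a L)) w)) (vscal (snd (hdiv a L)) w).
Proof.
  induction L as [|c L IH].
  - apply functional_extensionality; intros x; unfold vadd, vscal, Nop, vzero; simpl. unfold vzero. ring.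
  - destruct L as [|c' L'].
    + apply functional_extensionality; intros x; simpl; unfold vadd, vscal, Nop, vzero, Tsh; simpl; ring.
    + change (happ (c :: c' :: L') w) with (vadd (vscal c w) (Tsh (happ (c' :: L') w))).
      rewrite IH. rewrite (hdiv_cons a c c' L'). destruct (hdiv a (c' :: L')) as [Q r]. simpl.
      apply functional_extensionality; intros x; unfold vadd, vscal, Nop, Tsh; simpl. unfold vadd, vscal, Tsh; simpl. ring.
Qed.

Lemma hdiv_horner a L z : hornerL L z = (z - a) * hornerL (fst (hdiv a L)) z + snd (hdiv a L).
Proof.
  induction L as [|c L IH].
  - simpl. ring.
  - destruct L as [|c' L'].
    + simpl. ring.
    + change (hornerL (c :: c' :: L') z) with (c + z * hornerL (c' :: L') z).
      rewrite IH. rewrite (hdiv_cons a c c' L'). destruct (hdiv a (c' :: L')) as [Q r]. simpl. ring.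
Qed.

Lemma hdiv_len a L : length (fst (hdiv a L)) = pred (length L).
Proof.
  induction L as [|c L IH]; auto. destruct L as [|c' L']; auto.
  rewrite (hdiv_cons a c c' L'). destruct (hdiv a (c' :: L')) as [Q r]. simpl in *. lia.
Qed.

Lemma hdiv_zero a L : List.Forall (fun y => y = c0) (fst (hdiv a L)) ->
  List.Forall (fun y => y = c0) (tl L) /\ snd (hdiv a L) = hd c0 L.
Proof.
  induction L as [|c L IH]; [simpl; auto|]. destruct L as [|c' L']; [simpl; auto|].
  rewrite (hdiv_cons a c c' L'). destruct (hdiv a (c' :: L')) as [Q r]. simpl in *. intros HF.
  inversion HF; subst. destruct (IH H2) as [H1 H3]. subst c'. split.
  constructor; auto. ring.
Qed.

Lemma happ_zeros L w : List.Forall (fun y => y = c0) L -> happ L w = vzero.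
Proof. induction 1; simpl; auto. rewrite IHForall. subst.
  apply functional_extensionality; intros x; unfold vadd, vscal, Tsh, vzero; ring. Qed.

Lemma happ_in W L w : subsp W -> inv W -> W w -> W (happ L w).
Proof. intros HS HI Hw. induction L; simpl. apply HS. apply HS. apply HS; auto. apply HI; auto. Qed.

Lemma happ_seq c w m k : happ (map c (seq k m)) w =
  fun x => csum (fun i => c (k + i)%nat * Nat.iter i Tsh w x) m.
Proof.
  revert k. induction m; intros k. reflexivity.
  change (happ (map c (seq k (S m))) w) with (vadd (vscal (c k) w) (Tsh (happ (map c (seq (S k) m)) w))).
  rewrite IHm. apply functional_extensionality; intros x.
  rewrite csum_shift. unfold vadd, vscal, Tsh. simpl. rewrite Nat.add_0_r. f_equal.
  apply csum_ext. intros i Hi. replace (k + S i)%nat with (S k + i)%nat by lia. auto.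
Qed.

Lemma eig_poly W w : subsp W -> inv W -> W w -> (exists x, w x <> c0) ->
  forall n0 L, (length L <= n0)%nat -> (exists y, In y L /\ y <> c0) -> happ L w = vzero ->
  exists a e, W e /\ (exists x, e x <> c0) /\ Nop a e = vzero.
Proof.
  intros HS HI Hw [x0 Hx0]. induction n0; intros L HL Hy Hz.
  - destruct L; simpl in HL; [destruct Hy as [y [[] _]] | lia].
  - destruct L as [|c L']. destruct Hy as [y [[] _]].
    destruct (classic (exists y, In y L' /\ y <> c0)) as [HL'|HL'].
    + destruct (fta c L' HL') as [a Ha].
      assert (E := hdiv_happ a (c :: L') w). assert (E2 := hdiv_horner a (c :: L') a).
      unfold Cz in Ha. rewrite Ha in E2. replace (a - a) with c0 in E2 by ring.
      rewrite Cmult_0_l, Cplus_0_l in E2. rewrite <- E2 in E.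
      destruct (nz_or (happ (fst (hdiv a (c :: L'))) w)) as [HQ|HQ].
      * apply (IHn0 (fst (hdiv a (c :: L')))).
        rewrite hdiv_len. simpl in *. lia.
        apply NNPP. intros Hn.
        assert (HF : List.Forall (fun y => y = c0) (fst (hdiv a (c :: L')))).
        { apply List.Forall_forall. intros y Hy'. apply NNPP; intros Hy''. apply Hn; eauto. }
        destruct (hdiv_zero a (c :: L') HF) as [H1 _]. simpl in H1.
        destruct HL' as [y [Hy1 Hy2]]. rewrite List.Forall_forall in H1. apply Hy2; auto.
        auto.
      * exists a, (happ (fst (hdiv a (c :: L'))) w). split. apply happ_in; auto. split; auto.
        rewrite <- Hz, E. apply functional_extensionality; intros x; unfold vadd, vscal; ring.
    + exfalso. assert (HF : List.Forall (fun y => y = c0) L').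
      { apply List.Forall_forall. intros y Hy'. apply NNPP; intros Hy''. apply HL'; eauto. }
      assert (Hc : c <> c0).
      { destruct Hy as [y [[Hy1|Hy1] Hy2]]. subst; auto. exfalso; apply HL'; eauto. }
      assert (H := f_equal (fun u => u x0) Hz). simpl in H. rewrite (happ_zeros L' w HF) in H.
      unfold vadd, vscal, Tsh, vzero in H. rewrite Cplus_0_r in H. apply Hc. apply (Cmult_eq0 c (w x0)); auto.
Qed.
End Shift.

Open Scope C_scope.

Lemma least (P : nat -> Prop) k : P k -> exists l, P l /\ forall j, (j < l)%nat -> ~ P j.
Proof.
  revert P. induction k as [k IH] using lt_wf_ind. intros P Hk.
  destruct (classic (exists j, (j < k)%nat /\ P j)) as [[j [Hj1 Hj2]]|Hn].
  - apply (IH j Hj1 P Hj2).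
  - exists k. split; auto. intros j Hj Hp. apply Hn; eauto.
Qed.

Lemma lc_vzero c f m : (forall x, csum (fun i => c i * f i x) m = c0) -> lc c f m = vzero.
Proof. intros H. apply functional_extensionality; intros x. apply H. Qed.

Section Main.
Variable b : R.

Lemma eig W N w : subsp W -> inv b W -> bnd W N -> W w -> (exists x, w x <> c0) ->
  exists a e, W e /\ (exists x, e x <> c0) /\ Nop b a e = vzero.
Proof.
  intros HS HI HB Hw Hx.
  set (g := fun i => Nat.iter i (Tsh b) w).
  assert (Hg : fam W g (S N)).
  { intros i _. unfold g. induction i; simpl; auto. }
  specialize (HB g Hg). unfold indep in HB.
  apply not_all_ex_not in HB. destruct HB as [c Hc].
  apply imply_to_and in Hc. destruct Hc as [Hc1 Hc2].
  apply not_all_ex_not in Hc2. destruct Hc2 as [i Hc2].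
  apply imply_to_and in Hc2. destruct Hc2 as [Him Hci].
  apply (eig_poly b W w HS HI Hw Hx (S N) (map c (seq 0 (S N)))).
  - rewrite length_map, length_seq. auto.
  - exists (c i). split; auto. apply in_map. apply in_seq. lia.
  - rewrite happ_seq. apply functional_extensionality; intros x. apply (Hc1 x).
Qed.

Lemma Niter_big W N a u k : subsp W -> inv b W -> Niter b (S N) a u = vzero ->
  (k >= S N)%nat -> Niter b k a u = vzero.
Proof. intros HS HI H Hk. replace k with ((k - S N) + S N)%nat by lia.
  rewrite Niter_add, H. apply Niter_zero. Qed.

Lemma stab1 W N a u : subsp W -> inv b W -> bnd W N -> W u ->
  Niter b (S N) a u = vzero -> Niter b N a u = vzero.
Proof.
  intros HS HI HB Hu HN.
  destruct (nz_or (Niter b N a u)) as [H|[x0 Hx0]]; auto. exfalso.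
  apply (HB (fun i => Niter b i a u)).
  { intros i _. apply Niter_in; auto. }
  intros c Hc. apply NNPP. intros Hn.
  apply not_all_ex_not in Hn. destruct Hn as [i Hi]. apply imply_to_and in Hi.
  destruct Hi as [Hi1 Hi2].
  destruct (least (fun i => (i < S N)%nat /\ c i <> c0) i) as [i0 [[Hi0 Hci0] Hmin]]; auto.
  assert (Hz := lc_vzero _ _ _ Hc).
  apply (f_equal (Niter b (N - i0) a)) in Hz. rewrite Niter_lc, Niter_zero in Hz.
  apply (f_equal (fun v => v x0)) in Hz. unfold lc, vzero in Hz.
  rewrite (csum_single _ _ i0) in Hz; auto.
  - rewrite <- Niter_add in Hz. replace (N - i0 + i0)%nat with N in Hz by lia.
    apply Hci0. apply (Cmult_eq0 _ _ Hz Hx0).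
  - intros j Hj Hji. destruct (lt_dec j i0).
    + assert (c j = c0). { apply NNPP; intros Hcj. apply (Hmin j); auto. }
      rewrite H. ring.
    + rewrite <- Niter_add. rewrite (Niter_big W N a u); auto. unfold vzero. ring. lia.
Qed.
End Main.

Open Scope C_scope.

Section G.
Variable b : R.

Lemma stabK W N a u k : subsp W -> inv b W -> bnd W N -> W u ->
  (k >= N)%nat -> Niter b k a u = vzero -> Niter b N a u = vzero.
Proof.
  intros HS HI HB Hu Hk. induction k. replace N with 0%nat by lia. auto.
  destruct (Nat.eq_dec (S k) N) as [E|E]. rewrite E; auto.
  intros H. apply IHk. lia.
  replace k with (N + (k - N))%nat by lia. rewrite Niter_add.
  apply (stab1 b W N); auto. apply Niter_in; auto.
  rewrite <- Niter_add. replace (S N + (k - N))%nat with (S k) by lia. auto.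
Qed.

Lemma lc_fam_ext (W : X -> Prop) f m (g : nat -> X) : (forall i, (i < m)%nat -> f i = g i) ->
  forall c, lc c f m = lc c g m.
Proof. intros H c. apply functional_extensionality; intros x. unfold lc. apply csum_ext.
  intros i Hi. rewrite H; auto. Qed.

Definition gen_eig (f : X) := exists a k, Niter b k a f = vzero.

Definition Wtriv (W : X -> Prop) := forall u, W u -> u = vzero.

Theorem Gthm N : forall W, subsp W -> inv b W -> bnd W N ->
  exists m f, fam W f m /\ indep f m /\ (forall i, (i < m)%nat -> gen_eig (f i)) /\
   (forall u, W u -> exists c, forall x, u x = csum (fun i => c i * f i x) m).
Proof.
  induction N as [|N' IH]; intros W HS HI HB;
  (destruct (classic (Wtriv W)) as [Ht|Ht];
   [ exists 0%nat, (fun _ => vzero); split; [intros i Hi; lia|]; split; [intros c _ i Hi; lia|];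
     split; [intros i Hi; lia|]; intros u Hu; exists (fun _ => c0); intros x; rewrite (Ht u Hu); reflexivity
   | ]);
  (assert (Hw : exists w, W w /\ exists x, w x <> c0);
   [ apply NNPP; intros Hn; apply Ht; intros u Hu; destruct (nz_or u) as [H|H]; auto; exfalso; apply Hn; eauto
   | destruct Hw as [w [Hw Hwx]] ]).
  -
    exfalso. destruct (eig b W 0 w HS HI HB Hw Hwx) as [a [e [He [[x0 Hx0] _]]]].
    apply (HB (fun _ => e)). intros i _; auto.
    intros c Hc i Hi. replace i with 0%nat by lia. specialize (Hc x0). simpl in Hc.
    rewrite Cplus_0_l in Hc. apply (Cmult_eq0 _ _ Hc Hx0).
  - set (M := S N') in *.
    destruct (eig b W M w HS HI HB Hw Hwx) as [a [e [He [[x0 Hx0] He0]]]].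
    set (K := fun u => W u /\ Niter b M a u = vzero).
    set (I := fun u => exists w, W w /\ u = Niter b M a w).
    destruct HS as [HS0 [HSa HSs]].
    assert (HKs : subsp K).
    { split; [|split].
      - split; auto. apply Niter_zero.
      - intros u v [Hu1 Hu2] [Hv1 Hv2]. split; auto. rewrite Niter_add', Hu2, Hv2.
        apply functional_extensionality; intros x; unfold vadd, vzero; ring.
      - intros c u [Hu1 Hu2]. split; auto. rewrite Niter_scal, Hu2.
        apply functional_extensionality; intros x; unfold vscal, vzero; ring. }
    assert (HIs : subsp I).
    { split; [|split].
      - exists vzero. split; auto. rewrite Niter_zero; auto.
      - intros u v [w1 [Hw1 ->]] [w2 [Hw2 ->]]. exists (vadd w1 w2). split; auto. rewrite Niter_add'; auto.
      - intros c u [w1 [Hw1 ->]]. exists (vscal c w1). split; auto. rewrite Niter_scal; auto. }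
    assert (HSS : subsp W) by (split; auto).
    assert (HIi : inv b I).
    { intros u [w1 [Hw1 ->]]. exists (Tsh b w1). split; auto. apply Tsh_Niter. }
    assert (HIW : forall u, I u -> W u).
    { intros u [w1 [Hw1 ->]]. apply Niter_in; auto. }
    assert (HKW : forall u, K u -> W u) by (intros u [? ?]; auto).
    assert (HKI : forall u, K u -> I u -> u = vzero).
    { intros u [Hu1 Hu2] [w1 [Hw1 Hu]]. subst u. rewrite <- Niter_add in Hu2.
      apply (stabK W M a w1 (M + M)); auto. lia. }
    assert (HeK : K e).
    { split; auto. unfold M. rewrite Niter_S, He0. apply Niter_zero. }
    assert (HIb : bnd I N').
    { intros g Hg Hind. apply (HB (ext g e M)).
      { intros i Hi. unfold ext. destruct (Nat.eqb_spec i M); auto. apply HIW, Hg; lia. }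
      intros c Hc.
      set (v := lc c g M).
      assert (Hv : I v) by (apply subsp_lc; auto).
      assert (HvK : K v).
      { replace v with (vscal (- c M) e). apply HKs; auto.
        apply functional_extensionality; intros x. unfold v, lc, vscal.
        specialize (Hc x). rewrite csum_ext_last in Hc.
        replace (csum (fun i => c i * g i x) M) with (csum (fun i => c i * g i x) M + c M * e x - c M * e x) by ring.
        rewrite Hc. ring. }
      assert (Hv0 := HKI v HvK Hv).
      assert (Hc1 : forall i, (i < M)%nat -> c i = c0).
      { apply Hind. intros x. apply (f_equal (fun u => u x)) in Hv0. exact Hv0. }
      assert (HcM : c M = c0).
      { specialize (Hc x0). rewrite csum_ext_last in Hc.
        apply (f_equal (fun u => u x0)) in Hv0. unfold v, lc, vzero in Hv0. rewrite Hv0, Cplus_0_l in Hc.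
        apply (Cmult_eq0 _ _ Hc Hx0). }
      intros i Hi. destruct (Nat.eq_dec i M). subst; auto. apply Hc1; lia. }
    destruct (IH I HIs HIi HIb) as [m2 [f2 [Hf2 [Hind2 [Hgen2 Hspan2]]]]].
    assert (HKb : bnd K M).
    { intros g Hg. apply HB. intros i Hi; apply HKW; auto. }
    destruct (maxbasis K M HKb) as [m1 [f1 [Hf1 [Hind1 Hmax1]]]].
    destruct (maxbasis I N' HIb) as [m3 [f3 [Hf3 [Hind3 Hmax3]]]].
    assert (Hdec : forall u, W u -> exists k i, K k /\ I i /\ u = vadd k i).
    { intros u Hu.
      set (h := fun j => Niter b M a (f3 j)).
      assert (Hh : fam I h m3) by (intros j Hj; apply Niter_in; auto).
      assert (Hindh : indep h m3).
      { intros c Hc j Hj. apply Hind3; auto. intros x.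
        assert (E : lc c f3 m3 = vzero).
        { apply HKI. split. apply subsp_lc; auto. intros i Hi; apply HIW; auto.
          rewrite Niter_lc. apply lc_vzero. exact Hc. apply subsp_lc; auto. }
        apply (f_equal (fun u => u x)) in E. exact E. }
      assert (Hvi : I (Niter b M a u)) by (exists u; auto).
      destruct (span I h m3 _ HIs Hh Hindh Hmax3 Hvi) as [c Hc].
      assert (Hl : I (lc c f3 m3)) by (apply subsp_lc; auto).
      destruct Hl as [w2 [Hw2 Hl]].
      exists (fun x => u x - Niter b M a w2 x), (Niter b M a w2). split; [|split].
      - split. apply subsp_sub; auto. apply Niter_in; auto.
        rewrite Niter_sub. rewrite <- Hl. rewrite Niter_lc.
        apply functional_extensionality; intros x. rewrite Hc. unfold vzero, lc, h. ring.
      - exists w2; auto.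
      - apply functional_extensionality; intros x. unfold vadd; ring. }
    set (f := fun i => if Nat.ltb i m1 then f1 i else f2 (i - m1)%nat).
    assert (Hsplit : forall c x, csum (fun i => c i * f i x) (m1 + m2) =
        csum (fun i => c i * f1 i x) m1 + csum (fun j => c (m1 + j)%nat * f2 j x) m2).
    { intros c x. rewrite csum_split. f_equal; apply csum_ext; intros i Hi; unfold f.
      - destruct (Nat.ltb_spec i m1); auto; lia.
      - destruct (Nat.ltb_spec (m1 + i) m1). lia. replace (m1 + i - m1)%nat with i by lia. auto. }
    exists (m1 + m2)%nat, f. split; [|split; [|split]].
    + intros i Hi. unfold f. destruct (Nat.ltb_spec i m1). apply HKW, Hf1; auto. apply HIW, Hf2; lia.
    + intros c Hc.
      set (v1 := lc c f1 m1). set (v2 := lc (fun j => c (m1 + j)%nat) f2 m2).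
      assert (Hv1 : K v1) by (apply subsp_lc; auto).
      assert (Hv2 : I v2) by (apply subsp_lc; auto).
      assert (E : v1 = vscal (-1) v2).
      { apply functional_extensionality; intros x. specialize (Hc x). rewrite Hsplit in Hc.
        unfold v1, v2, lc, vscal.
        replace (csum (fun i => c i * f1 i x) m1) with (csum (fun i => c i * f1 i x) m1 + csum (fun j => c (m1 + j)%nat * f2 j x) m2 - csum (fun j => c (m1 + j)%nat * f2 j x) m2) by ring.
        rewrite Hc. ring. }
      assert (Hz1 : v1 = vzero). { apply HKI; auto. rewrite E. apply HIs; auto. }
      assert (Hz2 : v2 = vzero).
      { replace v2 with (vscal (-1) v1). apply HKI. apply HKs; auto. apply HIs. rewrite E. apply HIs; auto.
        rewrite E. apply functional_extensionality; intros x; unfold vscal; ring. }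
      intros i Hi. destruct (lt_dec i m1).
      * apply Hind1; auto. intros x. apply (f_equal (fun u => u x)) in Hz1. exact Hz1.
      * replace i with (m1 + (i - m1))%nat by lia.
        apply (Hind2 (fun j => c (m1 + j)%nat)); [|lia]. intros x. apply (f_equal (fun u => u x)) in Hz2. exact Hz2.
    + intros i Hi. unfold f. destruct (Nat.ltb_spec i m1).
      * exists a, M. apply Hf1; auto.
      * apply Hgen2. lia.
    + intros u Hu. destruct (Hdec u Hu) as [k [i [Hk [Hi ->]]]].
      destruct (span K f1 m1 k HKs Hf1 Hind1 Hmax1 Hk) as [c1 Hc1].
      destruct (Hspan2 i Hi) as [c2 Hc2].
      exists (fun j => if Nat.ltb j m1 then c1 j else c2 (j - m1)%nat). intros x.
      rewrite Hsplit. unfold vadd. rewrite Hc1, Hc2. f_equal; apply csum_ext; intros j Hj.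
      * destruct (Nat.ltb_spec j m1); auto; lia.
      * destruct (Nat.ltb_spec (m1 + j) m1). lia. replace (m1 + j - m1)%nat with j by lia. auto.
Qed.
End G.

Open Scope C_scope.

Lemma is_derive_eq {K : AbsRing} {V : NormedModule K} (f : K -> V) x l l' :
  is_derive f x l -> l = l' -> is_derive f x l'.
Proof. intros H ->; auto. Qed.

Lemma dC_fst (f : R -> C) x l : is_derive f x l -> is_derive (fun t => fst (f t)) x (fst l).
Proof.
  intros H. unfold is_derive in *.
  eapply filterdiff_ext_lin.
  apply (filterdiff_comp' f (fun t : C => fst t) x _ (fun t : C => fst t) H).
  apply filterdiff_linear. apply is_linear_fst.
  intros y. simpl. reflexivity.
Qed.

Lemma dC_snd (f : R -> C) x l : is_derive f x l -> is_derive (fun t => snd (f t)) x (snd l).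
Proof.
  intros H. unfold is_derive in *.
  eapply filterdiff_ext_lin.
  apply (filterdiff_comp' f (fun t : C => snd t) x _ (fun t : C => snd t) H).
  apply filterdiff_linear. apply is_linear_snd.
  intros y. simpl. reflexivity.
Qed.

Lemma dC_pair (f : R -> C) x l : is_derive (fun t => fst (f t)) x (fst l) ->
  is_derive (fun t => snd (f t)) x (snd l) -> is_derive f x l.
Proof.
  intros H1 H2.
  assert (H := @is_derive_plus R_AbsRing (prod_NormedModule R_AbsRing R_NormedModule R_NormedModule)
     (fun t => scal (fst (f t)) ((1%R, 0%R) : C)) (fun t => scal (snd (f t)) ((0%R, 1%R) : C)) x _ _
     (is_derive_scal_l _ _ _ _ H1) (is_derive_scal_l _ _ _ _ H2)).
  eapply is_derive_eq. eapply is_derive_ext. 2: exact H.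
  - intros t. simpl. destruct (f t) as [a c]. unfold scal, plus; simpl. unfold prod_scal, prod_plus; simpl.
    unfold scal, plus; simpl. unfold mult; simpl. f_equal; ring.
  - destruct l as [a c]. unfold scal, plus; simpl. unfold prod_scal, prod_plus; simpl.
    unfold scal, plus; simpl. unfold mult; simpl. f_equal; ring.
Qed.

Lemma dC_plus (f g : R -> C) x l l' : is_derive f x l -> is_derive g x l' ->
  is_derive (fun t => f t + g t) x (l + l').
Proof. intros H1 H2. exact (is_derive_plus f g x l l' H1 H2). Qed.

Lemma dR_lin (f g : R -> R) x l l' a c : is_derive f x l -> is_derive g x l' ->
  is_derive (fun t => a * f t + c * g t)%R x (a * l + c * l')%R.
Proof. intros H1 H2. apply (is_derive_plus (fun t => a * f t)%R (fun t => c * g t)%R x).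
  apply is_derive_scal; auto. apply is_derive_scal; auto. Qed.

Lemma dC_cmul (f : R -> C) x l c : is_derive f x l -> is_derive (fun t => c * f t) x (c * l).
Proof.
  intros H. apply dC_pair.
  - eapply is_derive_eq. eapply is_derive_ext. 2: apply (dR_lin _ _ x _ _ (fst c) (- snd c)%R (dC_fst _ _ _ H) (dC_snd _ _ _ H)).
    intros t. destruct c, (f t); simpl. ring. destruct c, l; simpl. ring.
  - eapply is_derive_eq. eapply is_derive_ext. 2: apply (dR_lin _ _ x _ _ (snd c) (fst c) (dC_fst _ _ _ H) (dC_snd _ _ _ H)).
    intros t. destruct c, (f t); simpl. ring. destruct c, l; simpl. ring.
Qed.

Lemma dC_const (c : C) x : is_derive (fun _ : R => c) x c0.
Proof. exact (@is_derive_const R_AbsRing (prod_NormedModule R_AbsRing R_NormedModule R_NormedModule) c x). Qed.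

Lemma dC_shift (f : R -> C) x l b : is_derive f (x + b)%R l -> is_derive (fun t => f (t + b)%R) x l.
Proof.
  intros H. assert (Hg : is_derive (fun t : R => (t + b)%R) x 1%R).
  { eapply is_derive_eq. apply (is_derive_plus (fun t : R => t) (fun _ => b) x). apply is_derive_id. apply is_derive_const.
    simpl. unfold plus, zero, one; simpl. ring. }
  eapply is_derive_eq. apply (is_derive_comp f (fun t => (t + b)%R) x l 1%R H Hg).
  exact (scal_one l).
Qed.

Lemma dC_csum (F : nat -> R -> C) (G : nat -> C) x m :
  (forall i, (i < m)%nat -> is_derive (F i) x (G i)) ->
  is_derive (fun t => csum (fun i => F i t) m) x (csum G m).
Proof.
  induction m; intros H; simpl. apply dC_const.
  apply dC_plus. apply IHm; intros; apply H; lia. apply H; lia.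
Qed.

Open Scope C_scope.

Lemma csum_swap (F : nat -> nat -> C) n m :
  csum (fun k => csum (fun i => F i k) m) n = csum (fun i => csum (fun k => F i k) n) m.
Proof. induction n; simpl. symmetry; apply csum_zero; auto. rewrite IHn, <- csum_plus. auto. Qed.

Definition sol_chain n (p : nat -> R -> C) (mu : C) (u : X) (d : nat -> R -> C) :=
  deriv_chain u n d /\ forall x, d n x + csum (fun k => p k x * d k x) (n - 1) = mu * u x.

Lemma sol_lc n p mu (u : nat -> X) (d : nat -> nat -> R -> C) c m :
  (forall i, (i < m)%nat -> sol_chain n p mu (u i) (d i)) ->
  sol_chain n p mu (lc c u m) (fun k x => csum (fun i => c i * d i k x) m).
Proof.
  intros H. split; [split|].
  - apply functional_extensionality; intros x. unfold lc. apply csum_ext. intros i Hi.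
    destruct (H i Hi) as [[H0 _] _]. rewrite H0. auto.
  - intros k Hk x. apply dC_csum. intros i Hi. apply dC_cmul. destruct (H i Hi) as [[_ H1] _]. apply H1; auto.
  - intros x. rewrite (csum_ext (fun k => p k x * csum (fun i => c i * d i k x) m)
       (fun k => csum (fun i => c i * (p k x * d i k x)) m)).
    rewrite csum_swap, <- csum_plus. unfold lc.
    transitivity (csum (fun i => mu * (c i * u i x)) m); [|apply csum_scal].
    apply csum_ext.
    intros i Hi. rewrite csum_scal. destruct (H i Hi) as [_ H2]. specialize (H2 x).
    replace (mu * (c i * u i x)) with (c i * (mu * u i x)) by ring. rewrite <- H2. ring.
    intros k Hk. rewrite <- csum_scal. apply csum_ext. intros i Hi. ring.
Qed.

Lemma sol_is n p mu u : is_solution n p mu u <-> exists d, sol_chain n p mu u d.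
Proof. split; intros [d Hd]; exists d; auto. Qed.

Lemma sol_subsp n p mu : subsp (is_solution n p mu).
Proof.
  split; [|split].
  - apply sol_is. exists (fun _ _ => c0).
    replace vzero with (lc (fun _ => c0) (fun _ => vzero) 0) by reflexivity.
    apply (sol_lc n p mu (fun _ => vzero) (fun _ _ _ => c0) (fun _ => c0) 0). intros; lia.
  - intros u v Hu Hv. apply sol_is in Hu, Hv. destruct Hu as [du Hu]. destruct Hv as [dv Hv].
    apply sol_is.
    replace (vadd u v) with (lc (fun _ => c1) (fun i => if Nat.eqb i 0 then u else v) 2).
    eexists. apply (sol_lc n p mu _ (fun i => if Nat.eqb i 0 then du else dv)).
    intros i Hi. destruct i; simpl; auto.
    apply functional_extensionality; intros x. unfold lc, vadd. simpl. ring.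
  - intros a u Hu. apply sol_is in Hu. destruct Hu as [du Hu]. apply sol_is.
    replace (vscal a u) with (lc (fun _ => a) (fun _ => u) 1).
    eexists. apply (sol_lc n p mu _ (fun _ => du)). intros i Hi; auto.
    apply functional_extensionality; intros x. unfold lc, vscal. simpl. ring.
Qed.

Lemma sol_shift n p mu b u : (forall k, (k <= n - 2)%nat -> periodic b (p k)) ->
  is_solution n p mu u -> is_solution n p mu (Tsh b u).
Proof.
  intros Hp [d [[H0 H1] H2]]. exists (fun k t => d k (t + b)%R). split; [split|].
  - rewrite H0. reflexivity.
  - intros k Hk x. apply dC_shift. apply H1; auto.
  - intros x. unfold Tsh. rewrite <- H2. f_equal. apply csum_ext. intros k Hk.
    rewrite Hp by lia. auto.
Qed.

Open Scope C_scope.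

Lemma dep_vec n : forall m (v : nat -> nat -> C), (n < m)%nat ->
  exists c : nat -> C, (exists i, (i < m)%nat /\ c i <> c0) /\
    forall k, (k < n)%nat -> csum (fun i => c i * v i k) m = c0.
Proof.
  induction n as [|n' IH]; intros m v Hm.
  - exists (fun _ => c1). split. exists 0%nat. split. lia. intros E. injection E. apply R1_neq_R0.
    intros k Hk; lia.
  - destruct m as [|m']. lia.
    destruct (classic (forall k, (k < S n')%nat -> v m' k = c0)) as [Hz|Hz].
    + exists (fun i => if Nat.eqb i m' then c1 else c0). split.
      exists m'. split. lia. rewrite Nat.eqb_refl. intros E. injection E. apply R1_neq_R0.
      intros k Hk. simpl. rewrite Nat.eqb_refl, Hz by auto. rewrite csum_zero. ring.
      intros i Hi. destruct (Nat.eqb_spec i m'). lia. ring.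
    + apply not_all_ex_not in Hz. destruct Hz as [k0 Hk0]. apply imply_to_and in Hk0.
      destruct Hk0 as [Hk0 Hpiv].
      set (piv := v m' k0).
      set (sk := fun k => if Nat.ltb k k0 then k else S k).
      set (v' := fun i k => v i (sk k) - (v i k0 / piv) * v m' (sk k)).
      destruct (IH m' v') as [c' [[i0 [Hi0 Hci0]] Hc']]. lia.
      set (s := csum (fun i => c' i * v i k0) m').
      exists (fun i => if Nat.ltb i m' then c' i else - s / piv). split.
      * exists i0. split. lia. destruct (Nat.ltb_spec i0 m'); auto. lia.
      * intros k Hk. simpl. rewrite Nat.ltb_irrefl.
        rewrite (csum_ext _ (fun i => c' i * v i k)).
        2:{ intros i Hi. destruct (Nat.ltb_spec i m'); auto. lia. }
        destruct (Nat.eq_dec k k0) as [->|Hne].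
        -- fold s. fold piv. field. auto.
        -- set (k' := if Nat.ltb k k0 then k else pred k).
           assert (Hsk : sk k' = k).
           { unfold sk, k'. destruct (Nat.ltb_spec k k0). destruct (Nat.ltb_spec k k0); lia.
             destruct (Nat.ltb_spec (pred k) k0); lia. }
           assert (Hk' : (k' < n')%nat).
           { unfold k'. destruct (Nat.ltb_spec k k0); lia. }
           specialize (Hc' k' Hk').
           unfold v' in Hc'. rewrite Hsk in Hc'.
           rewrite (csum_ext _ (fun i => c' i * v i k + (- (v m' k / piv)) * (c' i * v i k0))) in Hc'.
           2:{ intros i Hi. field. auto. }
           rewrite csum_plus, csum_scal in Hc'. fold s in Hc'.
           replace (csum (fun i => c' i * v i k) m') with (csum (fun i => c' i * v i k) m' + - (v m' k / piv) * s - - (v m' k / piv) * s) by ring.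
           rewrite Hc'. field. auto.
Qed.

Open Scope R_scope.

Fixpoint rsum (f : nat -> R) (m : nat) : R :=
  match m with O => 0 | S m' => rsum f m' + f m' end.

Lemma rsum_ext f g m : (forall i, (i < m)%nat -> f i = g i) -> rsum f m = rsum g m.
Proof. induction m; simpl; intros H; auto. rewrite IHm, H; auto. Qed.
Lemma rsum_le f g m : (forall i, (i < m)%nat -> f i <= g i) -> rsum f m <= rsum g m.
Proof. induction m; simpl; intros H. lra. assert (H1 := H m (Nat.lt_succ_diag_r m)).
  assert (rsum f m <= rsum g m) by (apply IHm; intros; apply H; lia). lra. Qed.
Lemma rsum_const c m : rsum (fun _ => c) m = INR m * c.
Proof. induction m. simpl. ring. change (rsum (fun _ => c) (S m)) with (rsum (fun _ => c) m + c). rewrite IHm, S_INR. ring. Qed.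
Lemma rsum_nonneg f m : (forall i, (i < m)%nat -> 0 <= f i) -> 0 <= rsum f m.
Proof. intros H. rewrite <- (Rmult_0_r (INR m)). rewrite <- rsum_const. apply rsum_le; auto. Qed.
Lemma rsum_abs f m : Rabs (rsum f m) <= rsum (fun i => Rabs (f i)) m.
Proof. induction m; simpl. rewrite Rabs_R0; lra. eapply Rle_trans. apply Rabs_triang. lra. Qed.
Lemma rsum_term f m k : (forall i, (i < m)%nat -> 0 <= f i) -> (k < m)%nat -> f k <= rsum f m.
Proof. induction m; intros H Hk. lia. simpl. destruct (Nat.eq_dec k m) as [->|].
  assert (0 <= rsum f m) by (apply rsum_nonneg; intros; apply H; lia). lra.
  assert (f k <= rsum f m) by (apply IHm; [intros; apply H; lia | lia]). assert (0 <= f m) by (apply H; lia). lra. Qed.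
Lemma rsum_plus f g m : rsum (fun i => f i + g i) m = rsum f m + rsum g m.
Proof. induction m; simpl. ring. rewrite IHm. ring. Qed.
Lemma rsum_scal a f m : rsum (fun i => a * f i) m = a * rsum f m.
Proof. induction m; simpl. ring. rewrite IHm. ring. Qed.

Definition sq (z : C) : R := fst z * fst z + snd z * snd z.
Definition ip (a b : C) : R := fst a * fst b + snd a * snd b.

Lemma sq_nonneg z : 0 <= sq z.
Proof. unfold sq. nra. Qed.
Lemma sq_zero z : sq z = 0 -> z = RtoC 0.
Proof. destruct z as [a b]. unfold sq; simpl. intros H.
  assert (a = 0) by nra. assert (b = 0) by nra. subst. reflexivity. Qed.
Lemma sq_mul a b : sq (a * b)%C = sq a * sq b.
Proof. destruct a, b. unfold sq; simpl. ring. Qed.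
Lemma ip_bound a b : Rabs (2 * ip a b) <= sq a + sq b.
Proof. destruct a as [a1 a2], b as [b1 b2]. unfold ip, sq; simpl. apply Rabs_le.
  assert (0 <= (a1-b1)*(a1-b1)) by apply Rle_0_sqr. assert (0 <= (a2-b2)*(a2-b2)) by apply Rle_0_sqr.
  assert (0 <= (a1+b1)*(a1+b1)) by apply Rle_0_sqr. assert (0 <= (a2+b2)*(a2+b2)) by apply Rle_0_sqr.
  split; nra. Qed.
Lemma ip_plus a b c : ip a (b + c)%C = ip a b + ip a c.
Proof. destruct a, b, c. unfold ip; simpl. ring. Qed.
Lemma ip_opp a b : ip a (- b)%C = - ip a b.
Proof. destruct a, b. unfold ip; simpl. ring. Qed.
Lemma ip_csum a f m : ip a (csum f m) = rsum (fun j => ip a (f j)) m.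
Proof. induction m; simpl. unfold ip; simpl. ring. rewrite ip_plus, IHm. auto. Qed.

Lemma dR_mul (f g : R -> R) x a b : is_derive f x a -> is_derive g x b ->
  is_derive (fun t => f t * g t) x (a * g x + f x * b).
Proof. intros H1 H2. apply (is_derive_mult f g x a b H1 H2). intros; apply Rmult_comm. Qed.

Lemma dR_plus (f g : R -> R) x a b : is_derive f x a -> is_derive g x b ->
  is_derive (fun t => f t + g t) x (a + b).
Proof. intros H1 H2. apply (is_derive_plus f g x a b H1 H2). Qed.

Lemma d_sq (f : R -> C) x l : is_derive f x l -> is_derive (fun t => sq (f t)) x (2 * ip (f x) l).
Proof.
  intros H. assert (H1 := dC_fst _ _ _ H). assert (H2 := dC_snd _ _ _ H).
  eapply is_derive_eq. { unfold sq. apply dR_plus; apply dR_mul; eauto. }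
  cbv beta. unfold ip. simpl. ring.
Qed.

Lemma dR_rsum (F : nat -> R -> R) (G : nat -> R) x m :
  (forall i, (i < m)%nat -> is_derive (F i) x (G i)) ->
  is_derive (fun t => rsum (fun i => F i t) m) x (rsum G m).
Proof.
  induction m; intros H; simpl. apply (is_derive_const (K := R_AbsRing) 0 x).
  apply dR_plus. apply IHm; intros; apply H; lia. apply H; lia.
Qed.

Lemma deriv_cont (f : R -> R) x l : is_derive f x l -> continuity_pt f x.
Proof. intros H. apply continuity_pt_filterlim. apply (ex_derive_continuous f x). exists l; auto. Qed.

Open Scope R_scope.

Lemma d_exp a t : is_derive (fun t => exp (a * t)) t (exp (a * t) * a).
Proof. auto_derive; auto. ring. Qed.

Lemma fin_bound (F : nat -> R -> R) m A B :
  (forall j, (j < m)%nat -> forall t, A <= t <= B -> continuity_pt (F j) t) -> A <= B ->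
  exists P, 0 <= P /\ forall j, (j < m)%nat -> forall t, A <= t <= B -> F j t <= P.
Proof.
  induction m; intros H HAB.
  - exists 0. split. lra. intros; lia.
  - destruct IHm as [P1 [HP1 H1]]. intros; apply H; auto; lia. auto.
    destruct (continuity_ab_maj (F m) A B HAB) as [Mx [HM _]]. intros; apply H; auto.
    exists (Rmax P1 (Rmax 0 (F m Mx))). split. 
    eapply Rle_trans. 2: apply Rmax_r. apply Rmax_l.
    intros j Hj t Ht. destruct (Nat.eq_dec j m) as [->|].
    + eapply Rle_trans. 2: apply Rmax_r. eapply Rle_trans. 2: apply Rmax_r. apply HM; auto.
    + eapply Rle_trans. 2: apply Rmax_l. apply H1; auto. lia.
Qed.

Lemma unique n p mu u d : (1 <= n)%nat ->
  (forall k, (k < n - 1)%nat -> forall t, continuity_pt (fun t => sq (p k t)) t) ->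
  sol_chain n p mu u d -> (forall k, (k < n)%nat -> d k 0 = RtoC 0) -> forall x, u x = RtoC 0.
Proof.
  intros Hn Hp [[H0 Hd] Heq] Hz x.
  set (XX := Rabs x + 1).
  destruct (fin_bound (fun k t => sq (p k t)) (n - 1) (- XX) XX) as [P [HP0 HP]].
  { intros j Hj t _. apply Hp; auto. }
  { unfold XX. assert (0 <= Rabs x) by apply Rabs_pos. lra. }
  set (E := fun t => rsum (fun k => sq (d k t)) n).
  set (E' := fun t => rsum (fun k => 2 * ip (d k t) (d (S k) t)) n).
  assert (HE : forall t, is_derive E t (E' t)).
  { intros t. apply dR_rsum. intros i Hi. apply d_sq. apply Hd; auto. }
  assert (HEnn : forall t, 0 <= E t).
  { intros t. apply rsum_nonneg. intros; apply sq_nonneg. }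
  assert (HEt : forall t k, (k < n)%nat -> sq (d k t) <= E t).
  { intros t k Hk. apply (rsum_term (fun k => sq (d k t))); auto. intros; apply sq_nonneg. }
  set (K0 := 2 + sq mu + INR (n - 1) * (1 + P)).
  assert (HK0 : 2 <= K0).
  { unfold K0. assert (0 <= sq mu) by apply sq_nonneg. assert (0 <= INR (n-1)) by apply pos_INR.
    assert (0 <= INR (n - 1) * (1 + P)) by (apply Rmult_le_pos; lra). lra. }
  set (L := INR n * K0).
  assert (HL : 0 <= L) by (unfold L; apply Rmult_le_pos; [apply pos_INR | lra]).
  assert (Hbound : forall t, - XX <= t <= XX -> Rabs (E' t) <= L * E t).
  { intros t Ht. unfold E'. eapply Rle_trans. apply rsum_abs.
    unfold L. rewrite Rmult_assoc, <- rsum_const. apply rsum_le. intros k Hk.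
    destruct (Nat.eq_dec (S k) n) as [Hkn|Hkn].
    - assert (Hdn : d (S k) t = (mu * d 0%nat t - csum (fun j => p j t * d j t) (n - 1))%C).
      { rewrite Hkn. rewrite <- H0 in Heq. rewrite <- (Heq t). ring. }
      rewrite Hdn. unfold Cminus. rewrite ip_plus, ip_opp, ip_csum.
      replace (2 * (ip (d k t) (mu * d 0%nat t) + - rsum (fun j => ip (d k t) (p j t * d j t)%C) (n - 1)))
        with (2 * ip (d k t) (mu * d 0%nat t) + - rsum (fun j => 2 * ip (d k t) (p j t * d j t)%C) (n - 1))
        by (rewrite rsum_scal; ring).
      eapply Rle_trans. apply Rabs_triang. rewrite Rabs_Ropp.
      eapply Rle_trans. apply Rplus_le_compat. apply ip_bound. apply rsum_abs.
      rewrite sq_mul.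
      assert (H1 : rsum (fun j => Rabs (2 * ip (d k t) (p j t * d j t)%C)) (n - 1) <= rsum (fun _ => E t + P * E t) (n - 1)).
      { apply rsum_le. intros j Hj. eapply Rle_trans. apply ip_bound. rewrite sq_mul.
        apply Rplus_le_compat. apply HEt; lia. apply Rmult_le_compat; try apply sq_nonneg.
        apply HP; auto; lra. apply HEt; lia. }
      rewrite rsum_const in H1.
      assert (sq (d k t) <= E t) by (apply HEt; lia).
      assert (sq mu * sq (d 0%nat t) <= sq mu * E t) by (apply Rmult_le_compat_l; [apply sq_nonneg | apply HEt; lia]).
      unfold K0. assert (0 <= E t) by auto. nra.
    - eapply Rle_trans. apply ip_bound.
      assert (sq (d k t) <= E t) by (apply HEt; lia). assert (sq (d (S k) t) <= E t) by (apply HEt; lia).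
      assert (0 <= E t) by auto. nra. }
  assert (HEx : E x = 0).
  { assert (HE0 : E 0 = 0).
    { unfold E. rewrite (rsum_ext _ (fun _ => 0)). rewrite rsum_const. ring.
      intros i Hi. rewrite Hz; auto. unfold sq; simpl. ring. }
    destruct (Rle_or_lt 0 x) as [Hx|Hx].
    - set (g := fun t => E t * exp (- L * t)).
      set (g' := fun t => E' t * exp (- L * t) + E t * (exp (- L * t) * - L)).
      destruct (MVT_gen g 0 x g') as [c [Hc Hmvt]].
      { intros t _. exact (dR_mul E (fun t => exp (-L * t)) t (E' t) (exp (-L*t) * -L) (HE t) (d_exp (-L) t)). }
      { intros t _. apply (deriv_cont g t (g' t)). exact (dR_mul E (fun t => exp (-L * t)) t (E' t) (exp (-L*t) * -L) (HE t) (d_exp (-L) t)). }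
      rewrite Rmin_left, Rmax_right in Hc by lra.
      assert (Hg' : g' c <= 0).
      { unfold g'. assert (He := exp_pos (- L * c)).
        assert (Hb : Rabs (E' c) <= L * E c) by (apply Hbound; unfold XX; split; assert (Rabs x >= x) by (apply Rle_ge, Rle_abs); lra).
        apply Rabs_le_between in Hb. nra. }
      unfold g in Hmvt. rewrite HE0 in Hmvt.
      assert (E x * exp (- L * x) <= 0) by nra.
      assert (He := exp_pos (- L * x)). assert (0 <= E x) by auto. nra.
    - set (g := fun t => E t * exp (L * t)).
      set (g' := fun t => E' t * exp (L * t) + E t * (exp (L * t) * L)).
      destruct (MVT_gen g x 0 g') as [c [Hc Hmvt]].
      { intros t _. exact (dR_mul E (fun t => exp (L * t)) t (E' t) (exp (L*t) * L) (HE t) (d_exp L t)). }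
      { intros t _. apply (deriv_cont g t (g' t)). exact (dR_mul E (fun t => exp (L * t)) t (E' t) (exp (L*t) * L) (HE t) (d_exp L t)). }
      rewrite Rmin_left, Rmax_right in Hc by lra.
      assert (Hg' : 0 <= g' c).
      { unfold g'. assert (He := exp_pos (L * c)).
        assert (Hb : Rabs (E' c) <= L * E c) by (apply Hbound; unfold XX; split; assert (Rabs x >= - x) by (rewrite <- Rabs_Ropp; apply Rle_ge, Rle_abs); lra).
        apply Rabs_le_between in Hb. nra. }
      unfold g in Hmvt. rewrite HE0 in Hmvt.
      assert (E x * exp (L * x) <= 0) by nra.
      assert (He := exp_pos (L * x)). assert (0 <= E x) by auto. nra. }
  rewrite <- H0. apply sq_zero. assert (sq (d 0%nat x) <= E x) by (apply HEt; lia).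
  assert (0 <= sq (d 0%nat x)) by apply sq_nonneg. lra.
Qed.

Open Scope C_scope.

Lemma smooth_cont (f : R -> C) : smooth f -> forall t, continuity_pt (fun t => sq (f t)) t.
Proof. intros [dd [H0 H1]] t. apply (deriv_cont _ t (2 * ip (f t) (dd 1%nat t))%R).
  apply d_sq. rewrite <- H0. apply H1. Qed.

Lemma bndV n p mu : (1 <= n)%nat ->
  (forall k, (k < n - 1)%nat -> forall t, continuity_pt (fun t => sq (p k t)) t) ->
  bnd (is_solution n p mu) n.
Proof.
  intros Hn Hp f Hf Hind.
  destruct (choice (fun i d => (i < S n)%nat -> sol_chain n p mu (f i) d)) as [dd Hdd].
  { intros i. destruct (lt_dec i (S n)) as [Hi|Hi].
    - destruct (Hf i Hi) as [d Hd]. exists d; auto.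
    - exists (fun _ _ => c0). intros; lia. }
  destruct (dep_vec n (S n) (fun i k => dd i k 0%R)) as [c [[i [Hi Hci]] Hc]]. lia.
  assert (Hs := sol_lc n p mu f dd c (S n) Hdd).
  assert (Hu := unique n p mu _ _ Hn Hp Hs).
  apply Hci. apply (Hind c); auto. intros x. apply Hu. intros k Hk. apply Hc; auto.
Qed.

Definition Zk n p mu b k (u : X) := is_solution n p mu u /\ forall j, (j < k)%nat -> u (INR j * b)%R = c0.

Lemma INR_shift j b : (INR j * b + b)%R = (INR (S j) * b)%R.
Proof. rewrite S_INR. ring. Qed.

Lemma Zstep n p mu b k u : (forall k, (k <= n - 2)%nat -> periodic b (p k)) ->
  is_solution n p mu u -> (forall j, (j < S k)%nat -> u (INR j * b)%R = c0) -> Zk n p mu b k (Tsh b u).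
Proof. intros Hp Hu Hz. split. apply sol_shift; auto. intros j Hj. unfold Tsh. rewrite INR_shift. apply Hz. lia. Qed.

Lemma Dinv_key n p mu b : (1 <= n)%nat ->
  (forall k, (k < n - 1)%nat -> forall t, continuity_pt (fun t => sq (p k t)) t) ->
  (forall k, (k <= n - 2)%nat -> periodic b (p k)) ->
  forall u, Zk n p mu b n u -> u (INR n * b)%R = c0.
Proof.
  intros Hn Hc Hp.
  set (Q := fun k => forall u, Zk n p mu b k u -> u (INR k * b)%R = c0).
  assert (Hext : forall k, Q k -> forall m, (m >= k)%nat -> Q m).
  { intros k Hk m Hm. induction m.
    - replace k with 0%nat in Hk by lia. auto.
    - destruct (Nat.eq_dec (S m) k) as [<-|Hne]; auto.
      intros u [Hu Hz]. assert (HQ := IHm ltac:(lia) (Tsh b u) (Zstep n p mu b m u Hp Hu Hz)).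
      unfold Tsh in HQ. rewrite INR_shift in HQ. auto. }
  destruct (classic (exists k, (k <= n)%nat /\ Q k)) as [[k [Hk HQ]]|Hno].
  - apply (Hext k HQ n). lia.
  - exfalso.
    assert (Hall : forall k, exists v, (k <= n)%nat -> Zk n p mu b k v /\ v (INR k * b)%R <> c0).
    { intros k. destruct (le_lt_dec k n) as [Hk|Hk].
      - apply NNPP. intros Hn'. apply Hno. exists k. split; auto. intros u Hu.
        apply NNPP. intros Hu'. apply Hn'. exists u. auto.
      - exists vzero. intros; lia. }
    destruct (choice _ Hall) as [g Hg].
    apply (bndV n p mu Hn Hc g).
    { intros i Hi. apply (Hg i). lia. }
    intros c Hcs. intros i. induction i as [i IH] using lt_wf_ind. intros Hi.
    specialize (Hcs (INR i * b)%R).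
    rewrite (csum_single _ _ i) in Hcs; auto.
    + destruct (Hg i) as [_ Hgi]. lia. apply (Cmult_eq0 _ _ Hcs Hgi).
    + intros j Hj Hji. destruct (lt_dec j i).
      * rewrite IH; auto. ring.
      * destruct (Hg j) as [[_ Hz] _]. lia. rewrite Hz. ring. lia.
Qed.

Open Scope C_scope.

Lemma D_subsp n p b mu : subsp (in_eigenspace n p b mu).
Proof.
  destruct (sol_subsp n p mu) as [H0 [Ha Hs]]. unfold in_eigenspace. split; [|split].
  - cbv beta. split; auto.
  - intros u v [Hu Hu'] [Hv Hv']. cbv beta. split; auto. intros j Hj. unfold vadd. rewrite Hu', Hv'; auto. ring.
  - intros a u [Hu Hu']. cbv beta. split; auto. intros j Hj. unfold vscal. rewrite Hu'; auto. ring.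
Qed.

Lemma flo n p b mu a W : (forall u, W u -> is_solution n p mu u) -> subsp W -> inv b W ->
  forall l g, W g -> Niter b (S l) a g = vzero -> (exists x, Niter b l a g x <> c0) ->
  floquet n p b mu a (S l) g.
Proof.
  intros HWV HS HI. induction l; intros g Hg Hz Hnz.
  - simpl. split; auto. split; auto. intros x.
    apply (f_equal (fun v => v x)) in Hz. simpl in Hz. unfold Nop, vzero in Hz.
    replace (g (x + b)%R) with (g (x + b)%R - a * g x + a * g x) by ring. rewrite Hz. ring.
  - change (floquet n p b mu a (S (S l)) g) with
      (is_solution n p mu g /\ exists v, floquet n p b mu a (S l) v /\ forall x, g (x + b)%R = a * g x + v x).
    split; auto. exists (Nop b a g). split.
    + apply IHl. apply Nop_in; auto. rewrite <- Niter_S. auto. rewrite <- Niter_S. auto.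
    + intros x. unfold Nop. ring.
Qed.

Close Scope C_scope.
Open Scope R_scope.

Theorem theorem3 (n : nat) (b : R) (p : nat -> R -> C) (mu : C) :
  (2 <= n)%nat -> 0 < b ->
  (forall k, (k <= n - 2)%nat -> smooth (p k) /\ periodic b (p k)) ->
  is_eigenvalue n p b mu ->
  (exists (m : nat) (f : nat -> R -> C),
      (forall i, (i < m)%nat ->
         in_eigenspace n p b mu (f i) /\
         exists (l : nat) (r : C), (1 <= l)%nat /\ floquet n p b mu r l (f i)) /\
      (forall c : nat -> C,
         (forall x, csum (fun i => (c i * f i x)%C) m = RtoC 0) ->
         forall i, (i < m)%nat -> c i = RtoC 0) /\
      (forall u, in_eigenspace n p b mu u ->
         exists c : nat -> C, forall x, u x = csum (fun i => (c i * f i x)%C) m))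
  /\
  (forall (l : nat) (r : C) (psi psi' : R -> C),
      (2 <= l)%nat ->
      floquet n p b mu r l psi ->
      in_eigenspace n p b mu psi ->
      floquet n p b mu r (l - 1) psi' ->
      (forall x, psi (x + b) = (r * psi x + psi' x)%C) ->
      in_eigenspace n p b mu psi').
Proof.
  intros Hn Hb Hp _.
  assert (Hn1 : (1 <= n)%nat) by lia.
  assert (Hc : forall k, (k < n - 1)%nat -> forall t, continuity_pt (fun t => sq (p k t)) t).
  { intros k Hk. apply smooth_cont. apply Hp. lia. }
  assert (Hper : forall k, (k <= n - 2)%nat -> periodic b (p k)) by (intros; apply Hp; auto).
  set (D := in_eigenspace n p b mu).
  assert (HDs : subsp D) by apply D_subsp.
  assert (HDi : inv b D).
  { intros u [Hu Hz]. split. apply sol_shift; auto. intros j Hj. unfold Tsh. rewrite INR_shift.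
    destruct (Nat.eq_dec (S j) n) as [E|Hne]. rewrite E. apply (Dinv_key n p mu b); auto. split; auto.
    apply Hz. lia. }
  assert (HDb : bnd D n).
  { intros f Hf. apply (bndV n p mu Hn1 Hc). intros i Hi. apply Hf; auto. }
  split.
  - destruct (Gthm b n D HDs HDi HDb) as [m [f [Hf [Hind [Hgen Hspan]]]]].
    exists m, f. split; [|split]; auto.
    intros i Hi. split. apply Hf; auto.
    destruct (Hgen i Hi) as [a [k Hk]].
    destruct (least (fun l => Niter b l a (f i) = vzero) k Hk) as [l [Hl Hmin]].
    destruct l as [|l].
    + exfalso. destruct (indep_nonzero f m i Hind Hi) as [x Hx]. apply Hx. simpl in Hl. rewrite Hl. reflexivity.
    + exists (S l), a. split. lia.
      assert (HDV : forall u, D u -> is_solution n p mu u) by (intros u [Hu _]; auto).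
      assert (Hnz : exists x, Niter b l a (f i) x <> c0).
      { destruct (nz_or (Niter b l a (f i))) as [H|H]; auto. exfalso. apply (Hmin l); auto. }
      apply (flo n p b mu a D HDV HDs HDi l (f i) (Hf i Hi) Hl Hnz).
  - intros l r psi psi' Hl _ Hpsi _ Hrel.
    replace psi' with (Nop b r psi). apply Nop_in; auto.
    apply functional_extensionality; intros x. unfold Nop. rewrite Hrel. ring_simplify. reflexivity.
Qed.
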